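(* Let $P$ denote the law of the (discrete-time, single-type) CMJ random tree and $\hat{P}$ the law of the size-biased CMJ tree (with immortal lineage). For every fixed level $n$ and every tree $t$, $$\hat{P}([T]_n = t) = E(N_n; [T]_n = t),$$ where the Nerman martingale $$N_n = \sum_{y \in I_n} e^{-\alpha \sigma_y}$$ is the reproductive value of the coming generation at time $n$.
   Context: Setting: a single-type Crump–Mode–Jagers (general branching) process in discrete time started from one ancestor born at time $0$. The individual reproduction law is given by probabilities $p_0$ and $p_k(n_1,\dots,n_k)$, $1\le n_1\le\dots\le n_k<\infty$, $k\ge1$, where $p_k(n_1,\dots,n_k)$ is the probability of having exactly $k$ children born at ages $n_1,\dots,n_k$ of the mother; individuals reproduce independently with this common law. Individuals are labelled by finite sequences $x=(x_1,\dots,x_j)$ of positive integers (the $i$-th daughter of $x$ is $xi$), each with an i.i.d. life $\omega_x$; the bearing ages of $x$ are $\tau_i(\omega_x)$ ($=\infty$ for $i$ beyond the offspring number), and the birth time of $x=(x_1,\dots,x_j)$ is $\sigma_x = \tau_{x_1}(\omega_0)+\tau_{x_2}(\omega_{x_1})+\dots+\tau_{x_j}(\omega_{x_1\dots x_{j-1}})$. Let $m_n$ be the mean number of children born to an individual at age $n$, and let $\alpha$ be the Malthusian parameter, the solution of $\sum_{n\ge1} e^{-\alpha n} m_n = 1$. The stopped tree at level $n$ is $[T]_n = \{\omega_x, x : \sigma_x \le n\}$ (all individuals born by time $n$ together with their complete lives). The coming generation $I_n$ at time $n$ is the set of vertices of the stopped tree $[T]_n$ located above level $n$, i.e. individuals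 $y$ with $\sigma_y > n$ whose mother was born by time $n$. The size-biased measure $\hat{P}$: there is a distinguished immortal lineage starting from the ancestor. An immortal individual has $k$ children at ages $n_1,\dots,n_k$ and designates its $j$-th child as the next immortal with probability $\hat{p}_{k,j}(n_1,\dots,n_k) = 1_{\{1\le j\le k\}} e^{-\alpha n_j} p_k(n_1,\dots,n_k)$; all other (mortal) individuals reproduce independently according to the original law $p_k(n_1,\dots,n_k)$. $\hat{P}([T]_n=t)$ is the marginal law of the (unlabelled-lineage) stopped tree under this measure. *)

(* Defs.v *)
From HB Require Import structures.
From mathcomp Require Import all_boot all_order all_algebra.
From mathcomp Require Import all_classical all_reals all_analysis.
Set Implicit Arguments. Unset Strict Implicit. Unset Printing Implicit Defensive.
Import Order.TTheory GRing.Theory Num.Theory.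
Local Open Scope classical_set_scope.
Local Open Scope ring_scope.

(* Ulam-Harris labels: x = (x_1,...,x_j), daughters indexed from 1. *)
Definition label := seq nat.
(* A life: the (finite, nondecreasing) list of bearing ages n_1 <= ... <= n_k. *)
Definition life := seq nat.

Definition valid_life (l : life) : bool := sorted leq l && all (fun a => 0 < a)%N l.

(* tau_i(omega): the age at which the i-th child is born (None = infinity). *)
Definition tau (i : nat) (l : life) : option nat :=
  if (0 < i)%N && (i <= size l)%N then Some (nth 0%N l i.-1) else None.

(* Birth time sigma_x given the lives w of all individuals (None = infinity). *)
Fixpoint birth (w : label -> life) (x : label) : option nat :=
  match x with
  | [::] => Some 0%N
  | i :: x' =>
      match tau i (w [::]), birth (fun y => w (i :: y)) x' with
      | Some a, Some b => Some (a + b)%N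
      | _, _ => None
      end
  end.

Definition born_by (n : nat) (w : label -> life) (x : label) : Prop :=
  exists s, birth w x = Some s /\ (s <= n)%N.

Definition stopped (n : nat) (w : label -> life) : label -> option life :=
  fun x => if birth w x is Some s then (if (s <= n)%N then Some (w x) else None)
           else None.

Definition coming (n : nat) (w : label -> life) : set label :=
  [set y | exists x i, y = rcons x i /\ born_by n w x /\
                       exists s, birth w y = Some s /\ (n < s)%N].

Definition nerman {R : realType} (alpha : R) (n : nat) (w : label -> life) : \bar R :=
  (\esum_(y in coming n w) (expR (- alpha * (odflt 0%N (birth w y))%:R))%:E)%E.

Definition mean_at {R : realType} (p : life -> R) (a : nat) : \bar R :=
  (\esum_(l in [set: life]) (p l * (count_mem a l)%:R)%:E)%E.

Definition phat {R : realType} (alpha : R) (p : life -> R) (j : nat) (l : life) : R :=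
  if tau j l is Some a then expR (- alpha * a%:R) * p l else 0.

(* Law of the life of individual z.1 (with life z.2) when the immortal of
   generation (size y) is y: immortal strict ancestors of y use phat with the
   index of the next immortal, all other individuals use p. *)
Definition size_biased_weight {R : realType} (alpha : R) (p : life -> R)
    (y : label) (z : label * life) : R :=
  if (size z.1 < size y)%N && prefix z.1 y then phat alpha p (nth 0%N y (size z.1)) z.2
  else p z.2.

(* Main.v *)
Require Import Defs.
From HB Require Import structures.
From mathcomp Require Import all_boot all_order all_algebra.
From mathcomp Require Import all_classical all_reals all_analysis.
Import Order.TTheory GRing.Theory Num.Theory.
Local Open Scope classical_set_scope.
Local Open Scope ring_scope.
Set Implicit Arguments. Unset Strict Implicit.

Lemma birth_rcons (w : label -> life) x j : birth w (rcons x j) =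
  match birth w x, tau j (w x) with Some a, Some b => Some (a + b)%N | _, _ => None end.
Proof.
elim: x w => [|i x IH] w /=.
  by case: (tau j (w [::])) => // b; rewrite add0n addn0.
rewrite IH; case: (tau i (w [::])) => [a|] //.
case: (birth _ x) => [b|] //; case: (tau j _) => [c|] //; by rewrite addnA.
Qed.

Lemma birth_ext (w w' : label -> life) y :
  (forall m, (m < size y)%N -> w (take m y) = w' (take m y)) -> birth w y = birth w' y.
Proof.
elim: y w w' => [|i y IH] w w' H //=.
rewrite (H 0%N) // (IH (fun z => w (i :: z)) (fun z => w' (i :: z))) //.
by move=> m hm; have /= := H m.+1 hm.
Qed.

Lemma birth_rcons_le (w : label -> life) x j s : birth w (rcons x j) = Some s ->
  exists2 s', birth w x = Some s' & (s' <= s)%N.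
Proof.
rewrite birth_rcons; case: (birth w x) => [a|] //; case: (tau j _) => [b|] // [<-].
by exists a => //; rewrite leq_addr.
Qed.

Lemma born_rcons n (w : label -> life) x j : born_by n w (rcons x j) -> born_by n w x.
Proof.
move=> [s [hs sn]]; have [s' h1 h2] := birth_rcons_le hs.
by exists s'; split => //; apply: leq_trans sn.
Qed.

Lemma born_take n (w : label -> life) x m : born_by n w x -> born_by n w (take m x).
Proof.
elim/last_ind: x => [|x j IH] hb; first by [].

rewrite -cats1 take_cat; case: ifP => hm.
  by apply: IH; apply: born_rcons hb.
case: (m - size x)%N => [|k] /=; first by rewrite cats0; apply: born_rcons hb.
by rewrite ?take0 cats1.
Qed.

Lemma born_nil n (w : label -> life) : born_by n w [::].
Proof. by exists 0%N. Qed.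

Lemma stopped_born n (w : label -> life) x : born_by n w x -> stopped n w x = Some (w x).
Proof. by move=> [s [hs sn]]; rewrite /stopped hs sn. Qed.

Lemma stopped_notborn n (w : label -> life) x : ~ born_by n w x -> stopped n w x = None.
Proof.
rewrite /stopped => H; case hs: (birth w x) => [s|] //.
case: ifP => // sn; exfalso; apply: H; by exists s.
Qed.

Lemma stopped_char n (w w0 : label -> life) :
  stopped n w = stopped n w0 <-> (forall x, born_by n w0 x -> w x = w0 x).
Proof.
split.
  move=> E x hb; move: (stopped_born hb); rewrite -E /stopped.
  by case: (birth w x) => // s; case: ifP => // _ [].
move=> H.
have Hb : forall x, born_by n w0 x -> birth w x = birth w0 x.
  move=> x hb; apply: birth_ext => m hm; apply: H; exact: born_take.
have Heq : forall x, born_by n w x <-> born_by n w0 x.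
  elim/last_ind => [|x j IH]; first by split => _; apply: born_nil.
  split.
    move=> hb; have hx : born_by n w0 x by apply/IH; apply: born_rcons hb.
    case: hb => s [hs sn]; exists s; split => //.
    by rewrite birth_rcons -(Hb _ hx) -(H _ hx) -birth_rcons.
  move=> hb; have hx := born_rcons hb.
  case: hb => s [hs sn]; exists s; split => //.
  by rewrite birth_rcons (Hb _ hx) (H _ hx) -birth_rcons.
apply/funext => x.
case: (pselect (born_by n w0 x)) => hb.
  rewrite !stopped_born ?H //; exact/Heq.
by rewrite !stopped_notborn // => /Heq.
Qed.

Lemma io_size (io : nat -> label) : io 0%N = [::] ->
  (forall k, exists j, io k.+1 = rcons (io k) j) -> forall k, size (io k) = k.
Proof.
move=> h0 hS; elim => [|k IH]; first by rewrite h0.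
by have [j ->] := hS k; rewrite size_rcons IH.
Qed.

Lemma io_take (io : nat -> label) : io 0%N = [::] ->
  (forall k, exists j, io k.+1 = rcons (io k) j) ->
  forall a b, (a <= b)%N -> io a = take a (io b).
Proof.
move=> h0 hS a; elim => [|b IH] hab.
  by move: hab; rewrite leqn0 => /eqP ->; rewrite h0.
move: hab; rewrite leq_eqVlt => /orP[/eqP ->|hab].
  by rewrite -[X in take X _](io_size h0 hS b.+1) take_size.
have [j ->] := hS b; rewrite -cats1 take_cat (io_size h0 hS).
rewrite ltnS in hab; case: ltnP => h; first exact: IH.
have eab : a = b by apply/eqP; rewrite eqn_leq hab h.
by rewrite eab subnn /= cats0.
Qed.

Definition optexp {R : realType} (alpha : R) (o : option nat) : R :=
  if o is Some a then expR (- alpha * a%:R) else 0.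

Lemma chain_prod {R : realType} (alpha : R) (w : label -> life) (y : label) :
  \prod_(m < size y) optexp alpha (tau (nth 0%N y m) (w (take m y))) = optexp alpha (birth w y).
Proof.
elim: y w => [|i y IH] w /=; first by rewrite big_ord0 /= mulr0 expR0.
rewrite big_ord_recl /=.
under eq_bigr do rewrite add0n.
rewrite (IH (fun z => w (i :: z))).
case: (tau i (w [::])) => [a|] /=; last by rewrite mul0r.
case: (birth _ y) => [b|] /=; last by rewrite mulr0.
by rewrite -expRD natrD mulrDr.
Qed.

Lemma take_rcons_le (x : label) j m : (m <= size x)%N -> take m (rcons x j) = take m x.
Proof. by move=> h; rewrite -cats1 takel_cat. Qed.

Lemma prod_sbw {R : realType} (alpha : R) (p : life -> R) (D : seq label)
  (v : label -> life) x0 j :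
  uniq D -> (forall x m, x \in D -> take m x \in D) -> x0 \in D ->
  \prod_(z <- D) size_biased_weight alpha p (rcons x0 j) (z, v z)
   = (\prod_(z <- D) p (v z)) * optexp alpha (birth v (rcons x0 j)).
Proof.
move=> uD PC x0D.
set y := rcons x0 j.
pose anc z := ((size z < size y)%N && prefix z y).
have sbwE z : size_biased_weight alpha p y (z, v z) =
    p (v z) * (if anc z then optexp alpha (tau (nth 0%N y (size z)) (v z)) else 1).
  rewrite /size_biased_weight /phat /= /anc; case: ifP => _; last by rewrite mulr1.
  by case: tau => [a|] /=; rewrite ?mul0r ?mulr0 // mulrC.
rewrite (eq_bigr _ (fun z _ => sbwE z)) big_split /=; congr (_ * _).
rewrite -big_mkcond -big_filter.
rewrite (perm_big [seq take m y | m <- iota 0 (size y)]); last first.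
  apply: uniq_perm.
  - exact: filter_uniq.
  - rewrite map_inj_in_uniq ?iota_uniq // => a b.
    rewrite !mem_iota /= !add0n => ha hb /(congr1 size).
    by rewrite !size_takel // ltnW.
  move=> z; rewrite mem_filter; apply/andP/mapP.
    move=> [/andP[hs hp] _]; exists (size z); first by rewrite mem_iota add0n.
    by move: hp; rewrite prefixE => /eqP ->.
  move=> [m]; rewrite mem_iota add0n => /andP[_ hm] ->; split.
    rewrite /anc size_takel; last exact: ltnW.
    by rewrite hm prefix_take.
  move: hm; rewrite /y size_rcons ltnS => hm.
  by rewrite take_rcons_le //; apply: PC.
rewrite big_map -chain_prod.
rewrite (_ : iota 0 (size y) = index_iota 0 (size y)); last by rewrite /index_iota subn0.
rewrite big_mkord.
by apply: eq_bigr => i _; rewrite size_takel // ltnW.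
Qed.

Lemma meas_list d (T : measurableType d) (W : label -> T -> life)
  (W_meas : forall x l, measurable [set om | W x om = l]) (D : seq label) (v : label -> life) :
  measurable [set om | forall x, x \in D -> W x om = v x].
Proof.
elim: D => [|a D IH].
  by rewrite (_ : [set _ | _] = setT) //; apply/seteqP; split => // om _ x.
rewrite (_ : [set _ | _] = [set om | W a om = v a] `&` [set om | forall x, x \in D -> W x om = v x]).
  exact: measurableI.
apply/seteqP; split => om /=.
  by move=> H; split => [|x xD]; apply: H; rewrite inE ?eqxx ?xD ?orbT.
by move=> [H1 H2] x; rewrite inE => /orP[/eqP ->|/H2].
Qed.

Lemma exit_unique (io : nat -> label) (D : seq label) :
  io 0%N = [::] -> (forall k, exists j, io k.+1 = rcons (io k) j) ->
  (forall x m, x \in D -> take m x \in D) ->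
  forall x x' j j', x \in D -> x' \in D -> rcons x j \notin D -> rcons x' j' \notin D ->
  io (size x).+1 = rcons x j -> io (size x').+1 = rcons x' j' -> x = x' /\ j = j'.
Proof.
move=> h0 hS PC x x' j j'.
wlog: x x' j j' / (size x <= size x')%N.
  move=> H; case: (leqP (size x) (size x')) => h; first exact: H.
  move=> a b c e f g; have [] := H x' x j' j (ltnW h) b a e c g f.
  by move=> -> ->.
move=> hle xD x'D nD nD' e e'.
have := io_take h0 hS (_ : (size x).+1 <= (size x').+1)%N; rewrite ltnS => /(_ hle).
rewrite e e'.
move: hle; rewrite leq_eqVlt => /orP[/eqP hs|hlt].
  rewrite hs -[X in take X _](size_rcons x' j') take_size => /rcons_inj [].
  by move=> -> ->.
rewrite take_rcons_le // => hh; exfalso; move/negP: nD; apply.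
by rewrite hh; apply: PC.
Qed.

Lemma L1 {R : realType} (alpha : R) (p : life -> R)
  (d' : measure_display) (Omega' : measurableType d') (Ph : probability Omega' R)
  (Wh : label -> Omega' -> life) (io : nat -> Omega' -> label)
  (Wh_meas : forall x l, measurable [set om | Wh x om = l])
  (iota_meas : forall k y, measurable [set om | io k om = y])
  (iota0 : forall om, io 0%N om = [::])
  (iotaS : forall om k, exists j, io k.+1 om = rcons (io k om) j)
  (Ph_law : forall (y : label) (S : seq (label * life)),
      uniq (map fst S) ->
      (forall z, z \in S -> ~~ prefix y z.1) ->
      (forall m, (m < size y)%N -> take m y \in map fst S) ->
      Ph [set om | io (size y) om = y /\ forall z, z \in S -> Wh z.1 om = z.2]
        = (\prod_(z <- S) size_biased_weight alpha p y z)%:E)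
  (D : seq label) (v : label -> life) :
  uniq D -> (forall x m, x \in D -> take m x \in D) -> [::] \in D ->
  Ph [set om | forall x, x \in D -> Wh x om = v x] =
  (\sum_(j <oo) \sum_(x <- D) (if rcons x j \in D then 0 else
     (\prod_(z <- D) size_biased_weight alpha p (rcons x j) (z, v z))%:E))%E.
Proof.
move=> uD PC rD.
set E := [set om | _].
have mE : measurable E by exact: meas_list.
pose G x j := [set om | E om /\ io (size x).+1 om = rcons x j /\ rcons x j \notin D].
pose F j := \bigcup_(x in [set` D]) G x j.
have mG x j : measurable (G x j).
  case h: (rcons x j \in D).
    by rewrite (_ : G x j = set0) //; apply/seteqP; split => om //= [_ [_]]; rewrite h.
  rewrite (_ : G x j = E `&` [set om | io (size x).+1 om = rcons x j]).
    exact: measurableI.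
  apply/seteqP; split => om /=; first by move=> [a [b _]].
  by move=> [a b]; split => //; split => //; rewrite h.
have uniqG x x' j j' om : x \in D -> x' \in D -> G x j om -> G x' j' om -> x = x' /\ j = j'.
  move=> xD x'D [_ [e1 n1]] [_ [e2 n2]].
  exact: (exit_unique (iota0 om) (iotaS om) PC xD x'D n1 n2 e1 e2).
have EF : E = \bigcup_j F j.
  apply/seteqP; split => om; last by move=> [j _ [x _ [? _]]].
  move=> Eom.
  have ex : exists k, io k om \notin D.
    exists (\max_(x <- D) size x).+1; apply/negP => hin.
    have := @leq_bigmax_seq _ D xpredT (fun x : label => size x) _ hin isT.
    by rewrite (io_size (iota0 om) (iotaS om)) ltnn.
  case: (ex_minnP ex) => k hk hmin.
  case: k hk hmin => [|k] hk hmin; first by move: hk; rewrite iota0 rD.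
  have [j ej] := iotaS om k.
  have hkD : io k om \in D.
    by apply/negPn/negP => /hmin; rewrite ltnn.
  exists j => //; exists (io k om) => //.
  split => //; rewrite (io_size (iota0 om) (iotaS om)) -ej; split => //.
have tF : trivIset setT F.
  move=> j j' _ _ [om [[x xD Gx] [x' x'D Gx']]].
  by have [_ ->] := uniqG _ _ _ _ _ xD x'D Gx Gx'.
rewrite EF measure_semi_bigcup //; last first.
  by apply: bigcup_measurable => j _; apply: fin_bigcup_measurable => // x _; exact: mG.
  by move=> j; apply: fin_bigcup_measurable => // x _; exact: mG.
apply: eq_eseriesr => j _.
transitivity (\sum_(i \in [set` D]) Ph (G i j))%E.
  apply: (measure_fin_bigcup Ph); first exact: finite_seq.
  - move=> x x' xD x'D [om [Gx Gx']].
    by have [-> _] := uniqG _ _ _ _ _ xD x'D Gx Gx'.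
  - by move=> x _; exact: mG.
rewrite -fsbig_seq //; apply: eq_big_seq => x xD.
case h: (rcons x j \in D).
  rewrite (_ : G x j = set0) ?measure0 //.
  by apply/seteqP; split => om //= [_ [_]]; rewrite h.
set S := [seq (z, v z) | z <- D].
have fS : [seq z.1 | z <- S] = D by rewrite -map_comp map_id.
have -> : G x j = [set om | io (size (rcons x j)) om = rcons x j /\
    forall z, z \in S -> Wh z.1 om = z.2].
  apply/seteqP; split => om /=.
    move=> [Eom [e _]]; rewrite size_rcons; split => // z /mapP [z' z'D ->] /=.
    exact: Eom.
  rewrite size_rcons => -[e H]; split; last by rewrite h.
  by move=> z zD; apply: (H (z, v z)); apply/mapP; exists z.
rewrite Ph_law; first by rewrite big_map.
- by rewrite fS.
- move=> z /mapP [z' z'D ->] /=; apply/negP => hp.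
  move/negP: h; apply; move: hp; rewrite prefixE => /eqP <-; exact: PC.
- move=> m; rewrite size_rcons ltnS fS => hm; rewrite take_rcons_le //; exact: PC.
Qed.

Lemma meas_born d (T : measurableType d) (W : label -> T -> life)
  (W_meas : forall x l, measurable [set om | W x om = l]) n (w0 : label -> life) :
  measurable [set om | forall x, born_by n w0 x -> W x om = w0 x].
Proof.
rewrite (_ : [set _ | _] = \bigcap_k [set om | forall x, unpickle k = Some x ->
    born_by n w0 x -> W x om = w0 x]).
  apply: bigcapT_measurable => k.
  case hk: (unpickle k) => [x|].
    case: (pselect (born_by n w0 x)) => hb.
      rewrite (_ : [set _ | _] = [set om | W x om = w0 x]) //.
      by apply/seteqP; split => om /= H; [apply: H | move=> y [<-] _].
    rewrite (_ : [set _ | _] = setT) //.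
    by apply/seteqP; split => om //= _ y [<-].
  by rewrite (_ : [set _ | _] = setT) //; apply/seteqP; split => om //= _ y.
apply/seteqP; split => om /=.
  by move=> H k _ x _; exact: H.
by move=> H x; apply: (H (pickle x)) => //; rewrite pickleK.
Qed.

Fixpoint gen (w : label -> life) (k : nat) : seq label :=
  if k is k'.+1 then flatten [seq [seq rcons x j | j <- iota 1 (size (w x))] | x <- gen w k']
  else [:: [::]].

Lemma tau_some j l a : tau j l = Some a -> (0 < j)%N /\ (j <= size l)%N /\ a = nth 0%N l j.-1.
Proof. by rewrite /tau; case: ifP => // /andP[h1 h2] [<-]. Qed.

Lemma born_gen n (w : label -> life) x : born_by n w x -> x \in gen w (size x).
Proof.
elim/last_ind: x => [|y j IH] hb; first by rewrite inE.
have hy := born_rcons hb; have := IH hy.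
case: hb => s [hs _]; move: hs; rewrite birth_rcons.
case: (birth w y) => // b; case ht: (tau j (w y)) => [a|] // _.
have [j0 [js _]] := tau_some ht.
rewrite size_rcons /= => hyg.
apply/flattenP; exists [seq rcons y j' | j' <- iota 1 (size (w y))].
  by apply/mapP; exists y.
by apply/mapP; exists j => //; rewrite mem_iota j0 add1n ltnS.
Qed.

Lemma born_size n (w : label -> life) :
  (forall x, born_by n w x -> valid_life (w x)) ->
  forall x s, birth w x = Some s -> (s <= n)%N -> (size x <= s)%N.
Proof.
move=> V; elim/last_ind => [|y j IH] s //.
rewrite birth_rcons; case hy: (birth w y) => [b|] //; case ht: (tau j (w y)) => [a|] // [<-] hs.
have hb : born_by n w y by exists b; split => //; apply: leq_trans hs; rewrite leq_addr.
have := IH b hy (leq_trans (leq_addr _ _) hs).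
have [j0 [js ->]] := tau_some ht.
have := V _ hb; rewrite /valid_life => /andP[_ /allP Hp].
have : (0 < nth 0%N (w y) j.-1)%N.
  by apply: Hp; apply: mem_nth; rewrite prednK.
rewrite size_rcons => h1 h2; rewrite -addn1; exact: leq_add.
Qed.

Lemma born_finite n (w : label -> life) :
  (forall x, born_by n w x -> valid_life (w x)) ->
  exists D : seq label, uniq D /\ forall x, x \in D <-> born_by n w x.
Proof.
move=> V.
exists (undup [seq x <- flatten [seq gen w k | k <- iota 0 n.+1] | `[< born_by n w x >]]).
split; first exact: undup_uniq.
move=> x; rewrite mem_undup mem_filter; split.
  by move=> /andP[/asboolP].
move=> hb; apply/andP; split; first exact/asboolP.
apply/flattenP; exists (gen w (size x)); last exact: born_gen hb.
apply/mapP; exists (size x) => //; rewrite mem_iota add0n ltnS /=.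
case: hb => s [hs sn]; exact: leq_trans (born_size V hs sn) sn.
Qed.

Lemma born_iff n (w w0 : label -> life) : (forall x, born_by n w0 x -> w x = w0 x) ->
  forall x, born_by n w x <-> born_by n w0 x.
Proof.
move=> H x; have E := (proj2 (stopped_char n w w0)) H.
split => hb.
  case: (pselect (born_by n w0 x)) => // nb.
  by have := stopped_born hb; rewrite E stopped_notborn.
case: (pselect (born_by n w x)) => // nb.
by have := stopped_born hb; rewrite -E stopped_notborn.
Qed.

Lemma birth_born_ext n (w w0 : label -> life) : (forall x, born_by n w0 x -> w x = w0 x) ->
  forall x i, born_by n w0 x -> birth w (rcons x i) = birth w0 (rcons x i).
Proof.
move=> H x i hb; rewrite !birth_rcons H //.
rewrite (@birth_ext w w0) // => m _; apply: H; exact: born_take.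
Qed.

Lemma nerman_ext {R : realType} (alpha : R) n (w w0 : label -> life) :
  (forall x, born_by n w0 x -> w x = w0 x) -> nerman alpha n w = nerman alpha n w0.
Proof.
move=> H.
have C : coming n w = coming n w0.
  apply/seteqP; split => y [x [i [-> [hb [s [hs hsn]]]]]].
    have hb0 := (born_iff H x).1 hb.
    exists x, i; split => //; split => //; exists s; split => //.
    by rewrite -(birth_born_ext H i hb0).
  exists x, i; split => //; split; first exact/(born_iff H).
  by exists s; split => //; rewrite (birth_born_ext H i hb).
rewrite /nerman C; apply: eq_esum => y [x [i [-> [hb _]]]].
by rewrite (birth_born_ext H i hb).
Qed.

Lemma mem_prefixes (x z : label) :
  (z \in [seq take m x | m <- iota 0 (size x).+1]) = prefix z x.
Proof.
apply/mapP/idP.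
  by move=> [m _ ->]; exact: prefix_take.
move=> hp; exists (size z); last by move: hp; rewrite prefixE => /eqP ->.
by rewrite mem_iota add0n ltnS size_prefix.
Qed.

Lemma uniq_prefixes (x : label) : uniq [seq take m x | m <- iota 0 (size x).+1].
Proof.
rewrite map_inj_in_uniq ?iota_uniq // => a b.
rewrite !mem_iota /= !add0n !ltnS => ha hb /(congr1 size).
by rewrite !size_takel.
Qed.

Lemma prod_zero {R : realType} (s : seq label) (F : label -> R) z0 :
  z0 \in s -> F z0 = 0 -> \prod_(z <- s) F z = 0.
Proof. by move=> h h0; rewrite (big_rem z0) //= h0 mul0r. Qed.

Definition prefixes (x : label) := [seq take m x | m <- iota 0 (size x).+1].

Lemma final_eq {R : realType} (alpha : R) (p : life -> R) (p_ge0 : forall l, 0 <= p l)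
  n (w0 : label -> life) (D : seq label) :
  uniq D -> (forall x, x \in D <-> born_by n w0 x) ->
  (\sum_(j <oo) \sum_(x <- D) (if rcons x j \in D then 0 else
     (\prod_(z <- D) size_biased_weight alpha p (rcons x j) (z, w0 z))%:E))%E
  = (nerman alpha n w0 * (\prod_(z <- D) p (w0 z))%:E)%E.
Proof.
move=> uD HD.
have PC : forall x m, x \in D -> take m x \in D.
  by move=> x m /HD hb; apply/HD; exact: born_take.
set Pp := \prod_(z <- D) p (w0 z).
have Pp0 : 0 <= Pp by apply: prodr_ge0 => z _.
pose K := (\max_(x <- D) size (w0 x)).+1.
have hK x : x \in D -> (size (w0 x) < K)%N.
  by move=> xD; rewrite ltnS; exact: (@leq_bigmax_seq _ D xpredT (fun x => size (w0 x))).
pose f y := (expR (- alpha * (odflt 0%N (birth w0 y))%:R))%:E.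
pose g x j := if `[< coming n w0 (rcons x j) >] then f (rcons x j) else 0%E.
have g0 x j : (0 <= g x j)%E by rewrite /g; case: ifP => // _; rewrite lee_fin expR_ge0.
pose T x j := if rcons x j \in D then 0%E else
   (\prod_(z <- D) size_biased_weight alpha p (rcons x j) (z, w0 z))%:E.
have term x j : x \in D -> T x j = (g x j * Pp%:E)%E.
  move=> xD; rewrite /T /g; case h: (rcons x j \in D).
    case: asboolP => [[x' [i [e [_ [s [hs hsn]]]]]]|_]; last by rewrite mul0e.
    move/HD: h => [s' [hs' hsn']]; rewrite hs in hs'.
    by case: hs' => es; move: hsn; rewrite es ltnNge hsn'.
  rewrite prod_sbw //; case hb: (birth w0 (rcons x j)) => [s|] /=; last first.
    rewrite mulr0; case: asboolP => [[x' [i [e [_ [s [hs hsn]]]]]]|_]; last by rewrite mul0e.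
    by rewrite hs in hb.
  case: asboolP => [_|nc].
    by rewrite /f hb /= -EFinM mulrC.
  exfalso; apply: nc; exists x, j; split => //; split; first exact/HD.
  exists s; split => //; rewrite ltnNge; apply/negP => sn.
  by move/negP: h; apply; apply/HD; exists s.
have T0 x j : x \in D -> (K <= j)%N -> T x j = 0%E.
  move=> xD hj; rewrite /T; case: ifP => // h.
  rewrite prod_sbw // birth_rcons.
  have -> : tau j (w0 x) = None.
    rewrite /tau; case: ifP => // /andP[_ hj2].
    by have := leq_trans (leq_ltn_trans hj2 (hK x xD)) hj; rewrite ltnn.
  by case: birth => [a|] /=; rewrite mulr0.
have T0' x j : x \in D -> (0 <= T x j)%E by move=> xD; rewrite term // mule_ge0.
rewrite -/T.
rewrite (nneseries_split 0 K); last first.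
  by move=> k _; rewrite big_seq; apply: sume_ge0 => x xD; exact: T0'.
rewrite add0n (eseries0 (N := K) (P := xpredT)); last first.
  by move=> i hi _; rewrite big_seq big1 // => x /T0; apply.
rewrite adde0 exchange_big /=.
have -> : nerman alpha n w0 = (\sum_(x <- D) \sum_(0 <= j < K) g x j)%E.
  set cand := [seq rcons x j | x <- D, j <- index_iota 0 K].
  have ucand : uniq cand.
    apply: allpairs_uniq => //; first exact: iota_uniq.
    by move=> [a b] [c e] _ _ /= /rcons_inj [-> ->].
  set cs := [seq y <- cand | `[< coming n w0 y >]].
  have Ceq : coming n w0 = [set` cs].
    apply/seteqP; split => y /=; last by rewrite mem_filter => /andP[/asboolP].
    move=> hc; rewrite mem_filter; apply/andP; split; first exact/asboolP.
    case: hc => [x [i [-> [hb [s [hs _]]]]]].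
    apply/allpairsP; exists (x, i); split => //=; first exact/HD.
    move: hs; rewrite birth_rcons; case: birth => // a; case ht: tau => [b|] // _.
    have [_ [hi _]] := tau_some ht.
    rewrite mem_index_iota /=; exact: leq_ltn_trans hi (hK x (proj2 (HD x) hb)).
  rewrite /nerman Ceq esum_fset; last 2 first.
  - exact: finite_seq.
  - by move=> i _; rewrite lee_fin expR_ge0.
  rewrite -fsbig_seq; last exact: filter_uniq.
  rewrite /cs; rewrite big_filter big_mkcond /cand big_flatten big_map.
  by apply: eq_bigr => x _; rewrite big_map.
rewrite ge0_sume_distrl; last by move=> x _; apply: sume_ge0.
rewrite big_seq [RHS]big_seq; apply: eq_bigr => x xD.
rewrite ge0_sume_distrl //; apply: eq_bigr => j _; exact: term.
Qed.

Unset Implicit Arguments.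

Theorem lemma5p1 (R : realType)
  (* reproduction law *)
  (p : life -> R)
  (p_ge0 : forall l, 0 <= p l)
  (p_valid : forall l, ~~ valid_life l -> p l = 0)
  (p_sum1 : (\esum_(l in [set: life]) (p l)%:E = 1)%E)
  (* Malthusian parameter *)
  (alpha : R)
  (malthus : (\esum_(a in [set a : nat | (0 < a)%N])
                 ((expR (- alpha * a%:R))%:E * mean_at p a) = 1)%E)
  (* the CMJ tree under P: i.i.d. lives with law p *)
  (d : measure_display) (Omega : measurableType d) (P : probability Omega R)
  (W : label -> Omega -> life)
  (W_meas : forall x l, measurable [set om | W x om = l])
  (W_iid : forall S : seq (label * life), uniq (map fst S) ->
      P [set om | forall z, z \in S -> W z.1 om = z.2] = (\prod_(z <- S) p z.2)%:E)
  (* the size-biased CMJ tree under Phat: lives Wh and immortal lineage iota *)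
  (d' : measure_display) (Omega' : measurableType d') (Ph : probability Omega' R)
  (Wh : label -> Omega' -> life) (iota : nat -> Omega' -> label)
  (Wh_meas : forall x l, measurable [set om | Wh x om = l])
  (iota_meas : forall k y, measurable [set om | iota k om = y])
  (iota0 : forall om, iota 0%N om = [::])
  (iotaS : forall om k, exists j, iota k.+1 om = rcons (iota k om) j)
  (Ph_law : forall (y : label) (S : seq (label * life)),
      uniq (map fst S) ->
      (forall z, z \in S -> ~~ prefix y z.1) ->
      (forall m, (m < size y)%N -> take m y \in map fst S) ->
      Ph [set om | iota (size y) om = y /\ forall z, z \in S -> Wh z.1 om = z.2]
        = (\prod_(z <- S) size_biased_weight alpha p y z)%:E)
  (n : nat) (t : label -> option life) :
  Ph [set om | stopped n (Wh ^~ om) = t]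
  = (\int[P]_(om in [set om | stopped n (W ^~ om) = t]) nerman alpha n (W ^~ om))%E.
Proof.
case: (pselect (exists w0, stopped n w0 = t)) => [[w0 <-] | nt]; last first.
  have -> : [set om | stopped n (Wh ^~ om) = t] = set0.
    by apply/seteqP; split => om //= h; apply: nt; exists (Wh ^~ om).
  have -> : [set om | stopped n (W ^~ om) = t] = set0.
    by apply/seteqP; split => om //= h; apply: nt; exists (W ^~ om).
  by rewrite measure0 integral_set0.
have Ev (T : Type) (Wx : label -> T -> life) :
    [set om | stopped n (Wx ^~ om) = stopped n w0] =
    [set om | forall x, born_by n w0 x -> Wx x om = w0 x].
  by apply/seteqP; split => om /= /stopped_char.
rewrite !Ev.
case: (pselect (exists x, born_by n w0 x /\ ~~ valid_life (w0 x))) => [[x [hbx nvx]] | allv].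
  have p0 : p (w0 x) = 0 by apply: p_valid.
  have LHS0 : Ph [set om | forall x, born_by n w0 x -> Wh x om = w0 x] = 0%E.
    have H0 : Ph [set om | forall z, z \in prefixes x -> Wh z om = w0 z] = 0%E.
      rewrite (@L1 _ alpha p _ _ Ph Wh iota Wh_meas iota_meas iota0 iotaS Ph_law).
      - apply: eseries0 => j _ _; rewrite big1_seq // => z _; case: ifP => // _.
        rewrite (prod_zero (z0 := x)) ?mem_prefixes ?prefix_refl //.
        rewrite /size_biased_weight /phat /=; case: ifP => _; last exact: p0.
        by case: tau => [a|] //; rewrite p0 mulr0.
      - exact: uniq_prefixes.
      - move=> z m; rewrite !mem_prefixes => hz; apply: prefix_trans hz; exact: prefix_take.
      - by rewrite mem_prefixes prefix0s.
    apply/eqP; rewrite eq_le measure_ge0 andbT.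
    apply: le_trans (_ : (_ <= Ph [set om | forall z, z \in prefixes x -> Wh z om = w0 z])%E) _; last by rewrite H0.
    apply: le_measure; rewrite ?inE; [exact: meas_born | exact: meas_list | ].
    move=> om H z; rewrite mem_prefixes => hp; apply: H.
    by move: hp; rewrite prefixE => /eqP <-; exact: born_take.
  rewrite LHS0.
  have N0 : P [set om | W x om = w0 x] = 0%E.
    rewrite (_ : [set om | _] = [set om | forall z, z \in [:: (x, w0 x)] -> W z.1 om = z.2]).
      by rewrite W_iid // big_seq1 p0.
    apply/seteqP; split => om /=.
      by move=> h z; rewrite inE => /eqP -> /=.
    by move=> H; exact: (H (x, w0 x) (mem_head _ _)).
  rewrite (eq_measure_integral mzero); first by rewrite integral_measure_zero.
  move=> A mA hA.
  transitivity (0 : \bar R); last by [].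
  apply/eqP; rewrite eq_le measure_ge0 andbT -N0.
  apply: le_measure; rewrite ?inE //.
  by move=> om /hA /=; apply.
have V : forall x, born_by n w0 x -> valid_life (w0 x).
  by move=> x hb; apply/negPn/negP => nv; apply: allv; exists x.
have [D [uD HD]] := born_finite V.
have ED (T : Type) (Wx : label -> T -> life) :
    [set om | forall x, born_by n w0 x -> Wx x om = w0 x] =
    [set om | forall x, x \in D -> Wx x om = w0 x].
  by apply/seteqP; split => om H z hz; apply: H; apply/HD.
have PC : forall x m, x \in D -> take m x \in D.
  by move=> x m /HD hb; apply/HD; exact: born_take.
have rD : [::] \in D by apply/HD; exact: born_nil.
rewrite !ED (@L1 _ alpha p _ _ Ph Wh iota Wh_meas iota_meas iota0 iotaS Ph_law) //.
rewrite (eq_integral (fun=> nerman alpha n w0)); last first.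
  move=> om; rewrite inE /= => H; apply: nerman_ext => z /HD; exact: H.
rewrite integral_cst; last exact: meas_list.
have PD : P [set om | forall x, x \in D -> W x om = w0 x] = (\prod_(z <- D) p (w0 z))%:E.
  have := W_iid [seq (z, w0 z) | z <- D]; rewrite -map_comp map_id big_map => /(_ uD) <-.
  congr (P _); apply/seteqP; split => om /= H.
    by move=> z /mapP [z' z'D ->] /=; exact: H.
  by move=> z zD; apply: (H (z, w0 z)); apply/mapP; exists z.
transitivity (nerman alpha n w0 * (\prod_(z <- D) p (w0 z))%:E)%E.
  exact: final_eq.
by congr (_ * _)%E; symmetry; exact: PD.
Qed.
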